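(* Let $G\in\mathcal{G}(\widehat{C}_6,\widehat{C}_7)$ and $x\in V(G)$, and suppose that the set $S^*$ is independent. Then $x$ is extendable in $H_x$ if and only if $x$ is extendable in $H^*_x$.
   Context: All graphs are finite, simple and undirected. $\mathcal{G}(\widehat{C}_6,\widehat{C}_7)$ is the family of graphs with no subgraph (not necessarily induced) isomorphic to $C_6$ or $C_7$. For a vertex set $S$, $N_i(S)$ is the set of vertices at distance exactly $i$ from $S$, $N_i[S]$ those at distance at most $i$, $N(S)=N_1(S)$, $N[S]=N_1[S]$, $N(v)=N(\{v\})$ etc. A vertex $v$ of a graph $H$ is extendable in $H$ if there is no independent set $S\subseteq N_2(v)$ (distances computed in $H$) with $N(v)\subseteq N[S]$ (in $H$). In $G$: $A^*$ is the set of connected components $A$ of $G[N_2(x)]$ for which there exists $a\in V(A)$ with $N(x)\cap N(a)=N(x)\cap N(V(A))$; $V(A^* )$ is the union of their vertex sets; $D=N(x)\setminus N(V(A^* ))$; $H_x=G[N_2[x]\setminus N[V(A^* )]]$; $S^*=\{v\in N_2(x)\setminus V(A^* ) : |N(v)\cap D|\ge 2\}$ (a subset of $V(H_x)$); and $H^*_x=G[V(H_x)\setminus N[S^*]]$ (neighbourhoods in $G$). *)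

(* Defs.v *)
(* A finite simple graph is a symmetric irreflexive relation
   e : rel T on a finite type T (vertex set = T). *)
From mathcomp Require Import all_boot.
Set Implicit Arguments. Unset Strict Implicit. Unset Printing Implicit Defensive.

Section Graphs.
Variable T : finType.

Definition simple_graph (e : rel T) := symmetric e /\ irreflexive e.

(* G contains a (not necessarily induced) subgraph isomorphic to C_k, k >= 3:
   k distinct vertices f 0, ..., f (k-1) with f i ~ f (i+1 mod k). *)
Definition has_cycle_subgraph (e : rel T) (k : nat) :=
  exists f : 'I_k -> T, injective f /\ forall i : 'I_k, e (f i) (f (ordS i)).

Definition C6C7_free (e : rel T) :=
  ~ has_cycle_subgraph e 6 /\ ~ has_cycle_subgraph e 7.

Definition induced (e : rel T) (W : {set T}) : rel T :=
  fun u v => [&& e u v, u \in W & v \in W].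

Definition nbh (r : rel T) (v : T) : {set T} := [set u | r v u].
Definition nbhS (r : rel T) (S : {set T}) : {set T} :=
  [set u | (u \notin S) && [exists s in S, r s u]].
Definition cnbhS (r : rel T) (S : {set T}) : {set T} := S :|: nbhS r S.
Definition nbh2 (r : rel T) (v : T) : {set T} :=
  [set u | [&& u != v, ~~ r v u & [exists w, r v w && r w u]]].
Definition cnbh2 (r : rel T) (v : T) : {set T} := v |: (nbh r v :|: nbh2 r v).

Definition independent (r : rel T) (S : {set T}) :=
  forall u v, u \in S -> v \in S -> ~~ r u v.

Definition extendable (r : rel T) (v : T) :=
  ~ exists S : {set T},
      [/\ S \subset nbh2 r v, independent r S & nbh r v \subset cnbhS r S].

Definition N2x (e : rel T) (x : T) := nbh2 e x.
Definition comp2 (e : rel T) (x u : T) : {set T} :=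
  [set w in N2x e x | connect (induced e (N2x e x)) u w].
Definition VAstar (e : rel T) (x : T) : {set T} :=
  [set u in N2x e x | [exists a in comp2 e x u,
      nbh e x :&: nbh e a == nbh e x :&: nbhS e (comp2 e x u)]].
Definition Dset (e : rel T) (x : T) : {set T} :=
  nbh e x :\: nbhS e (VAstar e x).
Definition VHx (e : rel T) (x : T) : {set T} :=
  cnbh2 e x :\: cnbhS e (VAstar e x).
Definition Sstar (e : rel T) (x : T) : {set T} :=
  [set v in N2x e x :\: VAstar e x | 2 <= #|nbh e v :&: Dset e x|].
Definition VHstarx (e : rel T) (x : T) : {set T} :=
  VHx e x :\: cnbhS e (Sstar e x).

End Graphs.

(* Main.v *)
Require Import Defs.
From mathcomp Require Import all_boot.
Set Implicit Arguments. Unset Strict Implicit.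

Lemma cyc6 (T : finType) (e : rel T) a0 a1 a2 a3 a4 a5 :
  uniq [:: a0;a1;a2;a3;a4;a5] -> e a0 a1 -> e a1 a2 -> e a2 a3 -> e a3 a4 -> e a4 a5 -> e a5 a0 ->
  has_cycle_subgraph e 6.
Proof.
move=> U h0 h1 h2 h3 h4 h5.
exists (fun i : 'I_6 => nth a0 [:: a0;a1;a2;a3;a4;a5] i); split.
  by move=> i j /eqP; rewrite nth_uniq // => /eqP /val_inj.
by case=> [[|[|[|[|[|[|?]]]]]] Hi].
Qed.

Lemma cyc7 (T : finType) (e : rel T) a0 a1 a2 a3 a4 a5 a6 :
  uniq [:: a0;a1;a2;a3;a4;a5;a6] -> e a0 a1 -> e a1 a2 -> e a2 a3 -> e a3 a4 -> e a4 a5 -> e a5 a6 -> e a6 a0 ->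
  has_cycle_subgraph e 7.
Proof.
move=> U h0 h1 h2 h3 h4 h5 h6.
exists (fun i : 'I_7 => nth a0 [:: a0;a1;a2;a3;a4;a5;a6] i); split.
  by move=> i j /eqP; rewrite nth_uniq // => /eqP /val_inj.
by case=> [[|[|[|[|[|[|[|?]]]]]]] Hi].
Qed.

Ltac clean_irr e Hirr :=
  repeat match goal with H : context[e ?a ?a] |- _ => rewrite Hirr in H
                       | H : context[?a == ?a] |- _ => rewrite eqxx in H end.

Ltac neq_solve e Hsym Hirr :=
  apply/eqP; let Heq := fresh "Heq" in intro Heq; subst; clean_irr e Hirr;
  first [ match goal with H : is_true (~~ true) |- _ => exfalso; move: H; rewrite /=; discriminate end
        | match goal with H : is_true false |- _ => exfalso; move: H; discriminate end
        | match goal with H1 : is_true (e ?a ?b), H2 : e ?a ?b = false |- _ => by rewrite H2 in H1 end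
        | match goal with H1 : is_true (e ?a ?b), H2 : e ?b ?a = false |- _ => by rewrite Hsym H2 in H1 end ].

Ltac uniq_solve e Hsym Hirr :=
  rewrite /= !inE !negb_or; repeat (apply/andP; split); try done; neq_solve e Hsym Hirr.

Ltac edge_solve e Hsym :=
  first [ assumption | rewrite Hsym; assumption ].

Ltac c6 e Hsym Hirr H6 l :=
  match l with [:: ?a0;?a1;?a2;?a3;?a4;?a5] =>
  apply: H6; apply: (@cyc6 _ e a0 a1 a2 a3 a4 a5);
  [uniq_solve e Hsym Hirr | edge_solve e Hsym ..] end.

Ltac c7 e Hsym Hirr H7 l :=
  match l with [:: ?a0;?a1;?a2;?a3;?a4;?a5;?a6] =>
  apply: H7; apply: (@cyc7 _ e a0 a1 a2 a3 a4 a5 a6);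
  [uniq_solve e Hsym Hirr | edge_solve e Hsym ..] end.


Lemma sd1 (T : finType) (e : rel T) (Hsym : symmetric e) (Hirr : irreflexive e)
  (H6 : ~ has_cycle_subgraph e 6) x d s t d1 d2 :
 e x d -> e x d1 -> e x d2 -> d1 != d2 -> e t d1 -> e t d2 -> e t s -> e s d -> e t d = false ->
 s != x -> t != x -> e x s = false -> e x t = false -> e s d1 = false.
Proof.
intros; apply/negP; intro.
c6 e Hsym Hirr H6 [:: x; d; s; d1; t; d2].
Qed.

Lemma ufacts (T : finType) (e : rel T) (Hsym : symmetric e) (Hirr : irreflexive e)
  (H6 : ~ has_cycle_subgraph e 6) (H7 : ~ has_cycle_subgraph e 7) x d s t d1 d2 u1 :
 e x d -> e x d1 -> e x d2 -> d1 != d2 -> e t d1 -> e t d2 -> e t s -> e s d -> e t d = false ->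
 s != x -> t != x -> e x s = false -> e x t = false ->
 u1 != x -> e x u1 = false -> e u1 d1 -> e s u1 = false ->
 [/\ e u1 t = false, e u1 d2 = false & forall d', e x d' -> e u1 d' -> d' = d1].
Proof.
move=> hxd hxd1 hxd2 hd12 htd1 htd2 hts hsd htd hsx htx hxs hxt hux hxu hud1 hsu.
have ? := sd1 Hsym Hirr H6 hxd hxd1 hxd2 hd12 htd1 htd2 hts hsd htd hsx htx hxs hxt.
have Hb : e u1 t = false.
  apply/negP; intro. c6 e Hsym Hirr H6 [:: x; d; s; t; u1; d1].
have Hc : e u1 d2 = false.
  apply/negP; intro. c7 e Hsym Hirr H7 [:: x; d; s; t; d1; u1; d2].
split => // d' Hxd' Hud'.
case: (eqVneq d' d1) => // Hne; exfalso.
case: (eqVneq d' d2) => Hd2.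
  by subst; rewrite Hud' in Hc.
c6 e Hsym Hirr H6 [:: x; d'; u1; d1; t; d2].
Qed.

Lemma zstep (T : finType) (e : rel T) (Hsym : symmetric e) (Hirr : irreflexive e)
  (H6 : ~ has_cycle_subgraph e 6) (H7 : ~ has_cycle_subgraph e 7) x d s t d1 d2 u1 z d' :
 e x d -> e x d1 -> e x d2 -> d1 != d2 -> e t d1 -> e t d2 -> e t s -> e s d -> e t d = false ->
 s != x -> t != x -> e x s = false -> e x t = false ->
 u1 != x -> e x u1 = false -> e u1 d1 -> e s u1 = false ->
 e u1 z -> z != x -> e x z = false -> e x d' -> e z d' -> d' != d1 ->
 e z d2 /\ e z d1 = false.
Proof.
move=> hxd hxd1 hxd2 hd12 htd1 htd2 hts hsd htd hsx htx hxs hxt hux hxu hud1 hsu huz hzx hxz hxd' hzd' hd'.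
have [? ? _] := ufacts Hsym Hirr H6 H7 hxd hxd1 hxd2 hd12 htd1 htd2 hts hsd htd hsx htx hxs hxt hux hxu hud1 hsu.
have ? := sd1 Hsym Hirr H6 hxd hxd1 hxd2 hd12 htd1 htd2 hts hsd htd hsx htx hxs hxt.
case: (eqVneq d' d2) => Hd2.
  subst; split => //.
  apply/negP; intro. c7 e Hsym Hirr H7 [:: x; d; s; t; d2; z; d1].
exfalso; c7 e Hsym Hirr H7 [:: x; d'; z; u1; d1; t; d2].
Qed.

Lemma cstep (T : finType) (e : rel T) (Hsym : symmetric e) (Hirr : irreflexive e)
  (H6 : ~ has_cycle_subgraph e 6) x d1 c y z d' :
  e x d1 -> c != x -> y != x -> z != x -> e x c = false -> e x y = false -> e x z = false ->
  (forall d'', e x d'' -> e c d'' -> d'' = d1) ->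
  (forall d'', e x d'' -> e y d'' -> d'' = d1) ->
  e c d1 -> e y d1 -> e c y -> e y z -> e x d' -> e z d' -> d' != d1 -> False.
Proof.
move=> hxd1 hcx hyx hzx hxc hxy hxz Bc By hcd1 hyd1 hcy hyz hxd' hzd' hd'.
have hcd : e c d' = false.
  apply/negP => hc; have E := Bc d' hxd' hc; by rewrite E eqxx in hd'.
have hyd : e y d' = false.
  apply/negP => hc; have E := By d' hxd' hc; by rewrite E eqxx in hd'.
clear Bc By.
c6 e Hsym Hirr H6 [:: d1; c; y; z; d'; x].
Qed.

Lemma fstep (T : finType) (e : rel T) (Hsym : symmetric e) (Hirr : irreflexive e)
  (H6 : ~ has_cycle_subgraph e 6) x d1 d2 u1 z1 u2 z2 :
  e x d1 -> e x d2 -> d1 != d2 ->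
  u1 != x -> z1 != x -> u2 != x -> z2 != x ->
  e x u1 = false -> e x z1 = false -> e x u2 = false -> e x z2 = false ->
  e u1 d1 -> e u1 z1 -> e z1 d2 -> e u2 d2 -> e u2 z2 -> e z2 d1 ->
  e u1 d2 = false -> e z1 d1 = false -> e u1 u2 = false -> False.
Proof.
intros.
c6 e Hsym Hirr H6 [:: d1; u1; z1; d2; u2; z2].
Qed.


Lemma cross (T : finType) (r : rel T) (B : pred T) (u : T) :
 forall p a, path r a p -> B a -> ~~ B (last a p) -> (a = u \/ exists c, B c /\ r c a) ->
 exists y z, [/\ B y, ~~ B z, r y z & (y = u \/ exists c, B c /\ r c y)].
Proof.
elim=> [|b p IH] a /=.
  by move=> _ Ba nBa; rewrite Ba in nBa.
move=> /andP[rab pth] Ba nB Inv.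
case Bb: (B b).
  by apply: (IH b pth Bb nB); right; exists a.
by exists a, b; split; rewrite ?Bb.
Qed.

Lemma N2P (T : finType) (e : rel T) x u :
  reflect [/\ u != x, e x u = false & exists w, e x w && e w u] (u \in N2x e x).
Proof.
rewrite /N2x /nbh2 inE; apply: (iffP and3P) => [[-> /negbTE -> /existsP //]|[-> -> H]].
by split => //; apply/existsP.
Qed.

Lemma VA_N2 (T : finType) (e : rel T) x u : u \in VAstar e x -> u \in N2x e x.
Proof. by rewrite /VAstar inE => /andP[]. Qed.

Lemma VA_closed (T : finType) (e : rel T) (Hsym : symmetric e) x s u :
  s \in VAstar e x -> u \in N2x e x -> e s u -> u \in VAstar e x.
Proof.
move=> sVA uN2 esu.
have sN2 := VA_N2 sVA.
have csym : connect_sym (induced e (N2x e x)).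
  apply: sym_connect_sym => a b; rewrite /induced (Hsym a b); congr (_ && _); exact: andbC.
have Hc : comp2 e x u = comp2 e x s.
  apply/setP => w; rewrite /comp2 !inE; congr (_ && _).
  apply: same_connect => //.
  by rewrite csym; apply: connect1; rewrite /induced esu sN2 uN2.
move: sVA; rewrite /VAstar inE => /andP[_ H]; by rewrite inE uN2 Hc.
Qed.

Lemma x_VH (T : finType) (e : rel T) (Hsym : symmetric e) x : x \in VHx e x.
Proof.
rewrite /VHx inE; apply/andP; split; last by rewrite /cnbh2 !inE eqxx.
rewrite /cnbhS inE negb_or; apply/andP; split.
  by apply/negP => /VA_N2 /N2P[]; rewrite eqxx.
rewrite /nbhS inE; apply/negP => /andP[_ /existsP[s /andP[/VA_N2 /N2P[_ h _] hs]]].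
by rewrite Hsym h in hs.
Qed.

Lemma SsP (T : finType) (e : rel T) x u : u \in Sstar e x ->
  [/\ u \in N2x e x, u \notin VAstar e x & 2 <= #|nbh e u :&: Dset e x|].
Proof. by rewrite /Sstar in_set in_setD => /andP[/andP[? ?] ?]. Qed.

Lemma Ss_N2 (T : finType) (e : rel T) x u : u \in Sstar e x -> u \in N2x e x.
Proof. by case/SsP. Qed.

Lemma x_VHs (T : finType) (e : rel T) (Hsym : symmetric e) x : x \in VHstarx e x.
Proof.
rewrite /VHstarx inE x_VH // andbT /cnbhS inE negb_or; apply/andP; split.
  by apply/negP => /Ss_N2 /N2P[]; rewrite eqxx.
rewrite /nbhS inE; apply/negP => /andP[_ /existsP[s /andP[/Ss_N2 /N2P[_ h _] hs]]].
by rewrite Hsym h in hs.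
Qed.

Lemma VHs_VH (T : finType) (e : rel T) x u : u \in VHstarx e x -> u \in VHx e x.
Proof. by rewrite /VHstarx inE => /andP[]. Qed.

Lemma N2_VH (T : finType) (e : rel T) (Hsym : symmetric e) x u :
  u \in N2x e x -> u \notin VAstar e x -> u \in VHx e x.
Proof.
move=> uN2 uVA; rewrite /VHx inE; apply/andP; split.
  rewrite /cnbhS inE negb_or uVA /= /nbhS inE (negbTE uVA) /=.
  apply/negP => /existsP[s /andP[sVA esu]].
  by rewrite (VA_closed Hsym sVA uN2 esu) in uVA.
rewrite /cnbh2 in_setU1 in_setU; apply/orP; right; apply/orP; right; exact: uN2.
Qed.

Lemma Ss_VH (T : finType) (e : rel T) (Hsym : symmetric e) x u : u \in Sstar e x -> u \in VHx e x.
Proof.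
by case/SsP => ? ? _; apply: N2_VH.
Qed.

Lemma D_VH (T : finType) (e : rel T) (Hsym : symmetric e) (Hirr : irreflexive e) x u :
  u \in Dset e x -> u \in VHx e x.
Proof.
rewrite /Dset in_setD => /andP[hn hx].
rewrite /VHx in_setD /cnbhS in_setU negb_or hn andbT /cnbh2 in_setU1 in_setU hx orbT andbT.
by apply/negP => /VA_N2 /N2P[_ h _]; move: hx; rewrite /nbh inE h.
Qed.

Lemma D_nbh (T : finType) (e : rel T) x u : u \in Dset e x -> e x u.
Proof. by rewrite /Dset !inE => /andP[_]. Qed.

Lemma VH_notVA (T : finType) (e : rel T) x u : u \in VHx e x -> u \notin VAstar e x.
Proof. by rewrite /VHx /cnbhS !inE negb_or -andbA => /andP[]. Qed.

Lemma induced_sub (T : finType) (e : rel T) x a b :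
  induced e (VHstarx e x) a b -> induced e (VHx e x) a b.
Proof. by rewrite /induced => /and3P[-> /VHs_VH -> /VHs_VH ->]. Qed.

Lemma S_N2 (T : finType) (e : rel T) (W : {set T}) x u :
  x \in W -> u \in nbh2 (induced e W) x -> [/\ u \in N2x e x, u \in W & u != x].
Proof.
move=> xW; rewrite inE => /and3P[ux nxu /existsP[w /andP[/and3P[h1 _ _] /and3P[h2 _ uW]]]].
split => //; apply/N2P; split => //.
  by apply/negbTE; move: nxu; rewrite /induced xW uW !andbT.
by exists w; rewrite h1 h2.
Qed.

Lemma comp_exit (T : finType) (e : rel T) (Hsym : symmetric e) x u d1 :
  u \in N2x e x -> u \notin VAstar e x ->
  (forall d', e x d' -> e u d' -> d' = d1) -> e u d1 ->
  exists w d', [/\ connect (induced e (N2x e x)) u w, e x d', e w d' & d' != d1].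
Proof.
move=> uN2 uVA Bu hud1.
have uc : u \in comp2 e x u by rewrite /comp2 inE uN2 connect0.
case: (boolP [exists w in comp2 e x u, [exists d', [&& e x d', e w d' & d' != d1]]]).
  move=> /exists_inP[w wc /existsP[d' /and3P[h1 h2 h3]]].
  move: wc; rewrite /comp2 inE => /andP[_ wc].
  by exists w, d'.
move/exists_inPn => Hne; exfalso; move/negP: uVA; apply.
rewrite /VAstar inE uN2 /=; apply/existsP; exists u; rewrite uc /=.
apply/eqP/setP => d; rewrite !in_setI.
rewrite [d \in nbh e x]inE [d \in nbh e u]inE [d \in nbhS _ _]inE.
case hxd: (e x d) => //=.
have -> : d \notin comp2 e x u.
  by apply/negP; rewrite /comp2 inE => /andP[/N2P[_ h _]]; rewrite h in hxd.
apply/idP/idP => /=.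
  by move=> hud; apply/existsP; exists u; rewrite uc hud.
move=> /existsP[s /andP[sc hsd]].
move: (Hne s sc) => /existsPn /(_ d); rewrite hxd hsd /= negbK => /eqP ->.
exact: hud1.
Qed.

Lemma N2_nb (T : finType) (e : rel T) x y : y \in N2x e x -> exists w, e x w && e w y.
Proof. by case/N2P. Qed.

Lemma B_of (T : finType) (e : rel T) (Hsym : symmetric e) x d1 v :
  [forall d'', (e x d'' && e v d'') ==> (d'' == d1)] ->
  forall d', e x d' -> e v d' -> d' = d1.
Proof. by move=> /forallP H d' a b; move: (H d'); rewrite a b => /eqP. Qed.

Lemma B_d1 (T : finType) (e : rel T) (Hsym : symmetric e) x d1 v :
  v \in N2x e x -> (forall d', e x d' -> e v d' -> d' = d1) -> e v d1.
Proof.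
case/N2P => _ _ [w /andP[a b]] H; rewrite Hsym in b.
by have E := H w a b; rewrite -E.
Qed.

Lemma getz (T : finType) (e : rel T) (Hsym : symmetric e) (Hirr : irreflexive e)
  (H6 : ~ has_cycle_subgraph e 6) (H7 : ~ has_cycle_subgraph e 7) x d s t d1 d2 u1 :
 e x d -> e x d1 -> e x d2 -> d1 != d2 -> e t d1 -> e t d2 -> e t s -> e s d -> e t d = false ->
 s != x -> t != x -> e x s = false -> e x t = false ->
 u1 \in N2x e x -> u1 \notin VAstar e x -> e u1 d1 -> e s u1 = false ->
 exists z, [/\ z != x, e x z = false, e u1 z, e z d2 & e z d1 = false].
Proof.
move=> hxd hxd1 hxd2 hd12 htd1 htd2 hts hsd htd hsx htx hxs hxt uN2 uVA hud1 hsu.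
case/N2P: (uN2) => hux hxu _.
have [hut hud2 Bu] := ufacts Hsym Hirr H6 H7 hxd hxd1 hxd2 hd12 htd1 htd2 hts hsd htd hsx htx hxs hxt hux hxu hud1 hsu.
have [w [d' [cw hxd' hwd' hd']]] := comp_exit Hsym uN2 uVA Bu hud1.
move/connectP: cw => [p pth wl].
pose B := fun v => [forall d'', (e x d'' && e v d'') ==> (d'' == d1)].
have Bu' : B u1 by apply/forallP => d''; apply/implyP => /andP[a b]; rewrite (Bu _ a b).
have nBw : ~~ B (last u1 p).
  by rewrite -wl; apply/forallPn; exists d'; rewrite hxd' hwd'.
have [y [z [By nBz ryz Inv]]] := cross pth Bu' nBw (or_introl erefl).
move: ryz; rewrite /induced => /and3P[eyz yN2 zN2].
move: nBz => /forallPn [d'' ]; rewrite negb_imply => /andP[/andP[h1 h2] h3].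
case/N2P: (zN2) => zx hxz _.
case: Inv => [Hy|[c [Bc rcy]]].
  subst y.
  have [hzd2 hzd1] := zstep Hsym Hirr H6 H7 hxd hxd1 hxd2 hd12 htd1 htd2 hts hsd htd hsx htx hxs hxt hux hxu hud1 hsu eyz zx hxz h1 h2 h3.
  by exists z.
exfalso.
move: rcy; rewrite /induced => /and3P[ecy cN2 _].
case/N2P: (cN2) => cx hxc _.
case/N2P: (yN2) => yx hxy _.
have Bc' := B_of Hsym Bc.
have By' := B_of Hsym By.
exact: (cstep Hsym Hirr H6 hxd1 cx yx zx hxc hxy hxz Bc' By' (B_d1 Hsym cN2 Bc') (B_d1 Hsym yN2 By') ecy eyz h1 h2 h3).
Qed.

Lemma VHs_nadj (T : finType) (e : rel T) x u v :
  u \in VHstarx e x -> v \in Sstar e x -> e v u = false.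
Proof.
rewrite /VHstarx in_setD /cnbhS in_setU negb_or => /andP[/andP[uS nb] _] vS.
apply/negbTE/negP => evu; move/negP: nb; apply.
by rewrite /nbhS inE uS /=; apply/exists_inP; exists v.
Qed.

Lemma key (T : finType) (e : rel T) (Hsym : symmetric e) (Hirr : irreflexive e)
  (H6 : ~ has_cycle_subgraph e 6) (H7 : ~ has_cycle_subgraph e 7) x (S : {set T}) s d t :
  S \subset nbh2 (induced e (VHx e x)) x -> independent (induced e (VHx e x)) S ->
  nbh (induced e (VHx e x)) x \subset cnbhS (induced e (VHx e x)) S ->
  s \in S -> e s d -> e x d -> d \in VHstarx e x -> t \in Sstar e x -> e t s -> False.
Proof.
move=> sub ind dom sS esd hxd dVHs tS ets.
have xVH := x_VH Hsym x.
have [sN2 sVH _] := S_N2 xVH (subsetP sub s sS).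
case/SsP: (tS) => tN2 tVA tc.
case/N2P: (tN2) => tx hxt _.
case/N2P: (sN2) => sx hxs _.
move/card_gt1P: tc => [d1 [d2 [h1 h2 hd12]]].
move: h1; rewrite in_setI => /andP[td1 d1D]; rewrite inE in td1.
move: h2; rewrite in_setI => /andP[td2 d2D]; rewrite inE in td2.
have htd := VHs_nadj dVHs tS.
have hsd := esd.
have getu : forall d0, d0 \in Dset e x -> exists u, [/\ u \in S, e u d0, u \in N2x e x, u \in VHx e x & u != x].
  move=> d0 d0D.
  have hr : induced e (VHx e x) x d0 by rewrite /induced (D_nbh d0D) xVH (D_VH Hsym Hirr d0D).
  have := subsetP dom d0; rewrite inE => /(_ hr).
  rewrite /cnbhS in_setU => /orP[d0S|].
    have [d0N2 _ _] := S_N2 xVH (subsetP sub d0 d0S).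
    by case/N2P: d0N2 => _; rewrite D_nbh.
  rewrite /nbhS inE => /andP[_ /exists_inP[u uS]]; rewrite /induced => /and3P[eud _ _].
  have [uN2 uVH ux] := S_N2 xVH (subsetP sub u uS).
  by exists u.
have [u1 [u1S hu1d1 u1N2 u1VH u1x]] := getu d1 d1D.
have [u2 [u2S hu2d2 u2N2 u2VH u2x]] := getu d2 d2D.
have indE : forall a b, a \in S -> b \in S -> e a b = false.
  move=> a b aS bS; move: (ind a b aS bS).
  have [_ aVH _] := S_N2 xVH (subsetP sub a aS).
  have [_ bVH _] := S_N2 xVH (subsetP sub b bS).
  by rewrite /induced aVH bVH !andbT => /negbTE.
have hxd1 := D_nbh d1D.
have hxd2 := D_nbh d2D.
have [z1 [z1x hxz1 hu1z1 hz1d2 hz1d1]] :=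
  getz Hsym Hirr H6 H7 hxd hxd1 hxd2 hd12 td1 td2 ets esd htd sx tx hxs hxt u1N2 (VH_notVA u1VH) hu1d1 (indE _ _ sS u1S).
have hd21 : d2 != d1 by rewrite eq_sym.
have [z2 [z2x hxz2 hu2z2 hz2d1 hz2d2]] :=
  getz Hsym Hirr H6 H7 hxd hxd2 hxd1 hd21 td2 td1 ets esd htd sx tx hxs hxt u2N2 (VH_notVA u2VH) hu2d2 (indE _ _ sS u2S).
case/N2P: (u1N2) => _ hxu1 _.
case/N2P: (u2N2) => _ hxu2 _.
have [_ hu1d2 _] := ufacts Hsym Hirr H6 H7 hxd hxd1 hxd2 hd12 td1 td2 ets esd htd sx tx hxs hxt u1x hxu1 hu1d1 (indE _ _ sS u1S).
exact: (fstep Hsym Hirr H6 hxd1 hxd2 hd12 u1x z1x u2x z2x hxu1 hxz1 hxu2 hxz2 hu1d1 hu1z1 hz1d2 hu2d2 hu2z2 hz2d1 hu1d2 hz1d1 (indE _ _ u1S u2S)).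
Qed.

Unset Implicit Arguments. Set Strict Implicit.

Theorem lemma2p14 (T : finType) (e : rel T) (x : T) :
  simple_graph e -> C6C7_free e ->
  independent e (Sstar e x) ->
  (extendable (induced e (VHx e x)) x <-> extendable (induced e (VHstarx e x)) x).
Proof.
move=> [Hsym Hirr] [H6 H7] Hind.
have xVH := x_VH Hsym x.
have xVHs := x_VHs Hsym x.
split.
- move=> Hext [S' [sub ind dom]]; apply: Hext; exists (S' :|: Sstar e x); split.
  + apply/subsetP => u; rewrite in_setU => /orP[uS'|uSs].
      have := subsetP sub u uS'.
      have [uN2 _ _] := S_N2 xVHs (subsetP sub u uS').
      case/N2P: uN2 => _ hxu _.
      rewrite !inE => /and3P[ux _ /existsP[w /andP[h1 h2]]].
      rewrite ux /=; apply/andP; split; first by rewrite /induced hxu.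
      by apply/existsP; exists w; rewrite (induced_sub h1) (induced_sub h2).
    case/SsP: (uSs) => uN2 uVA hc.
    case/N2P: (uN2) => ux hxu _.
    have : 0 < #|nbh e u :&: Dset e x| by apply: ltnW.
    case/card_gt0P => w; rewrite in_setI => /andP[wn wD].
    rewrite inE ux /induced hxu /=; apply/existsP; exists w.
    rewrite xVH (D_VH Hsym Hirr wD) (Ss_VH Hsym uSs) (D_nbh wD) /= !andbT.
    by rewrite inE in wn; rewrite Hsym.
  + move=> u v; rewrite !in_setU => /orP[uS'|uSs] /orP[vS'|vSs].
    * have := ind u v uS' vS'; apply: contra.
      have [_ uVHs _] := S_N2 xVHs (subsetP sub u uS').
      have [_ vVHs _] := S_N2 xVHs (subsetP sub v vS').
      by rewrite /induced uVHs vVHs !andbT => /andP[].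
    * have [_ uVHs _] := S_N2 xVHs (subsetP sub u uS').
      by rewrite /induced Hsym (VHs_nadj uVHs vSs).
    * have [_ vVHs _] := S_N2 xVHs (subsetP sub v vS').
      by rewrite /induced (VHs_nadj vVHs uSs).
    * by rewrite /induced (negbTE (Hind u v uSs vSs)).
  + apply/subsetP => d; rewrite inE => hrd.
    have := hrd; rewrite /induced => /and3P[hxd _ dVH].
    have dnS : d \notin S' :|: Sstar e x.
      rewrite in_setU; apply/negP => /orP[dS'|dSs].
        have [dN2 _ _] := S_N2 xVHs (subsetP sub d dS').
        by case/N2P: dN2 => _; rewrite hxd.
      by case/N2P: (Ss_N2 dSs) => _; rewrite hxd.
    case: (boolP (d \in nbhS e (Sstar e x))) => hdn.
      move: hdn; rewrite /nbhS inE => /andP[_ /exists_inP[t tS etd]].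
      rewrite /cnbhS in_setU; apply/orP; right.
      rewrite /nbhS inE dnS /=; apply/exists_inP; exists t; first by rewrite in_setU tS orbT.
      by rewrite /induced etd (Ss_VH Hsym tS) dVH.
    have dVHs : d \in VHstarx e x.
      rewrite /VHstarx in_setD dVH andbT /cnbhS in_setU negb_or hdn andbT.
      by apply/negP => /Ss_N2 /N2P[_ h _]; rewrite h in hxd.
    have hr : induced e (VHstarx e x) x d by rewrite /induced hxd xVHs dVHs.
    have := subsetP dom d; rewrite inE => /(_ hr).
    rewrite /cnbhS in_setU => /orP[dS'|].
      by move: dnS; rewrite in_setU dS'.
    rewrite /nbhS inE => /andP[_ /exists_inP[s sS' rsd]].
    rewrite /cnbhS in_setU; apply/orP; right.
    rewrite /nbhS inE dnS /=; apply/exists_inP; exists s; first by rewrite in_setU sS'.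
    exact: induced_sub.
- move=> Hext [S [sub ind dom]]; apply: Hext.
  exists [set s in S | [exists w, induced e (VHstarx e x) x w && induced e (VHstarx e x) w s]].
  split.
  + apply/subsetP => u; rewrite inE => /andP[uS hw].
    have [uN2 uVH ux] := S_N2 xVH (subsetP sub u uS).
    rewrite inE ux hw andbT /=.
    case/N2P: uN2 => _ h _.
    by rewrite /induced h.
  + move=> u v; rewrite !inE => /andP[uS _] /andP[vS _].
    have := ind u v uS vS; apply: contra; exact: induced_sub.
  + apply/subsetP => d; rewrite inE => hrd.
    have := hrd; rewrite /induced => /and3P[hxd _ dVHs].
    have dVH := VHs_VH dVHs.
    have hrd' : induced e (VHx e x) x d by rewrite /induced hxd xVH dVH.
    have := subsetP dom d; rewrite inE => /(_ hrd').
    have dnS : d \notin S.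
      apply/negP => dS; have [dN2 _ _] := S_N2 xVH (subsetP sub d dS).
      by case/N2P: dN2 => _; rewrite hxd.
    rewrite /cnbhS in_setU (negbTE dnS) /=.
    rewrite /nbhS inE => /andP[_ /exists_inP[s sS rsd]].
    have [sN2 sVH sx] := S_N2 xVH (subsetP sub s sS).
    move: rsd; rewrite /induced => /and3P[esd _ _].
    have sSs : s \notin Sstar e x.
      by apply/negP => sSs; have := VHs_nadj dVHs sSs; rewrite esd.
    have snb : s \notin nbhS e (Sstar e x).
      apply/negP; rewrite /nbhS inE => /andP[_ /exists_inP[t tS ets]].
      exact: (key Hsym Hirr H6 H7 sub ind dom sS esd hxd dVHs tS ets).
    have sVHs : s \in VHstarx e x.
      by rewrite /VHstarx in_setD sVH /cnbhS in_setU negb_or sSs snb.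
    rewrite /cnbhS in_setU; apply/orP; right; rewrite /nbhS inE.
    apply/andP; split.
      by rewrite inE negb_and dnS.
    apply/exists_inP; exists s.
      rewrite inE sS /=; apply/existsP; exists d.
      apply/andP; split => //; by rewrite /induced (Hsym d s) esd dVHs sVHs.
    by rewrite /induced esd sVHs dVHs.
Qed.
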